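(* The edge generating series of the Grand Dyck lattices is $$\sum_{n\ge0}\ell(\mathcal{GD}_n)x^n=\frac{x}{(1-4x)^{3/2}},$$ and for every $n\ge0$, $\ell(\mathcal{GD}_n)=\binom{2n}{n}\frac n2$. Consequently $i(\mathcal{GD}_n)=n/2$ for all $n$.
   Context: Steps: $U=(1,1)$, $D=(1,-1)$. $\mathcal{GD}_n$ is the set of all lattice paths from $(0,0)$ to $(2n,0)$ with steps $U,D$, partially ordered by $\gamma_1\le\gamma_2$ iff $\gamma_1$ lies weakly below $\gamma_2$. For a finite poset $P$, $\ell(P)$ is the number of edges of its Hasse diagram (number of covering pairs) and $i(P)=\ell(P)/|P|$. *)

(* Defs.v *)
From HB Require Import structures.
From mathcomp Require Import all_boot all_order all_algebra.
Set Implicit Arguments. Unset Strict Implicit. Unset Printing Implicit Defensive.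
Import Order.TTheory GRing.Theory Num.Theory.
Local Open Scope ring_scope.

(* A lattice path with steps U=(1,1), D=(1,-1) of length 2n is encoded as a
   (2n)-tuple of booleans: true = U, false = D. *)
Definition step (b : bool) : int := if b then 1 else -1.

Definition height (s : seq bool) (k : nat) : int :=
  \sum_(b <- take k s) step b.

Definition GD (n : nat) : {set (2 * n)%N.-tuple bool} :=
  [set t : (2 * n)%N.-tuple bool | height t (2 * n) == 0].

Definition below (n : nat) (s t : (2 * n)%N.-tuple bool) : bool :=
  [forall k : 'I_(2 * n).+1, height s k <= height t k].

Definition hasse_edges (T : finType) (A : {set T}) (le : rel T) : {set T * T} :=
  [set p : T * T | [&& p.1 \in A, p.2 \in A, p.1 != p.2, le p.1 p.2 &
     ~~ [exists c in A, [&& c != p.1, c != p.2, le p.1 c & le c p.2]]]].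

Definition ell_GD (n : nat) : nat := #|hasse_edges (GD n) (@below n)|.

Definition i_GD (n : nat) : rat := (ell_GD n)%:R / (#|GD n|)%:R.

(* coefficient of x^n in the formal power series x/(1-4x)^(3/2), via the
   generalized binomial expansion (1-4x)^(-3/2) = sum_m 4^m (3/2)_m / m! x^m
   ((a)_m the rising factorial). *)
Definition gf_coef (n : nat) : rat :=
  match n with
  | 0 => 0
  | m.+1 => 4 ^+ m * (\prod_(i < m) (3%:R / 2%:R + i%:R)) / (m`!)%:R
  end.

(* Main.v *)
Require Import Defs.
From HB Require Import structures.
From mathcomp Require Import all_boot all_order all_algebra.
From mathcomp Require Import zify ring lra.
Import Order.TTheory GRing.Theory Num.Theory.
Set Implicit Arguments. Unset Strict Implicit. Unset Printing Implicit Defensive.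
Local Open Scope ring_scope.

Lemma sum_stepE (s : seq bool) :
  \sum_(b <- s) step b = (size s)%:Z - 2%:Z * (count negb s)%:Z.
Proof.
elim: s => [|b s IH]; first by rewrite big_nil.
rewrite big_cons IH /=; case: b => /=; rewrite /step ?add0n ?add1n; lia.
Qed.

Lemma heightE (s : seq bool) k :
  height s k = (minn k (size s))%:Z - 2%:Z * (count negb (take k s))%:Z.
Proof. by rewrite /height sum_stepE size_take_min. Qed.

Lemma height0 (s : seq bool) : height s 0 = 0.
Proof. by rewrite /height take0 big_nil. Qed.

Lemma heightS (s : seq bool) k : (k < size s)%N ->
  height s k.+1 = height s k + step (nth false s k).
Proof. by move=> hk; rewrite /height (take_nth false hk) -cats1 big_cat big_seq1. Qed.

Lemma height_eq_seq (s t : seq bool) : size s = size t ->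
  (forall k, (k <= size s)%N -> height s k = height t k) -> s = t.
Proof.
move=> hst hh; apply: (eq_from_nth (x0:=false) hst) => k hk.
have := hh k.+1 hk; rewrite !heightS -?hst // hh ?(ltnW hk) // => /addrI.
by case: (nth false s k); case: (nth false t k).
Qed.

Lemma height_diff_even (s t : seq bool) k : (k <= size s)%N -> (k <= size t)%N ->
  exists z : int, height t k - height s k = 2%:Z * z.
Proof.
move=> hs ht; rewrite !heightE !(minn_idPl _) //.
exists ((count negb (take k s))%:Z - (count negb (take k t))%:Z); lia.
Qed.

Definition flip m (t : m.-tuple bool) (i : nat) : m.-tuple bool :=
  [tuple if (j == i :> nat) then true else if (j == i.+1 :> nat) then false else tnth t j | j < m].

Definition valley m (t : m.-tuple bool) (i : nat) : bool :=
  [&& (i.+1 < m)%N, ~~ nth false t i & nth false t i.+1].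

Lemma nth_flip m (t : m.-tuple bool) i j : (i.+1 < m)%N ->
  nth false (flip t i) j = if j == i then true else if j == i.+1 then false else nth false t j.
Proof.
move=> hi; case: (ltnP j m) => hj.
  by rewrite -(tnth_nth false (flip t i) (Ordinal hj)) tnth_mktuple /= (tnth_nth false).
rewrite !nth_default ?size_tuple //.
by rewrite (gtn_eqF (leq_trans hi hj)) (gtn_eqF (leq_trans (ltnW hi) hj)).
Qed.

Lemma height_flip m (t : m.-tuple bool) i k : valley t i -> (k <= m)%N ->
  height (flip t i) k = height t k + (if k == i.+1 then 2 else 0).
Proof.
case/and3P=> hi hd hu; elim: k => [|k IH] hk; first by rewrite !height0.
rewrite !heightS ?size_tuple // IH ?(ltnW hk) // nth_flip //.
have hd' : nth false t i = false by apply: negbTE.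
case: (eqVneq k i) => [->|hki].
  rewrite eqxx ?(ltn_eqF (ltnSn _)) ?(gtn_eqF (ltnSn _)) hd' /step; lia.
case: (eqVneq k i.+1) => [->|hki1].
  rewrite ?eqxx hu ?(ltn_eqF (ltnSn _)) ?(gtn_eqF (ltnSn _)) /=; rewrite /step; lia.
by rewrite ?(negbTE hki1) ?(negbTE hki) eqSS (negbTE hki) addr0 addr0.
Qed.

Lemma belowP n (s t : (2 * n)%N.-tuple bool) :
  reflect (forall k, (k <= 2 * n)%N -> height s k <= height t k) (below s t).
Proof.
apply: (iffP forallP) => [h k hk | h k]; last by apply: h; rewrite -ltnS.
by have := h (Ordinal (hk : (k < (2 * n).+1)%N)).
Qed.

Lemma inGD n (t : (2 * n)%N.-tuple bool) : (t \in GD n) = (count negb t == n).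
Proof.
rewrite inE heightE size_tuple minnn take_oversize ?size_tuple //; apply/eqP/eqP; lia.
Qed.

Lemma flip_GD n (t : (2 * n)%N.-tuple bool) i : valley t i -> t \in GD n -> flip t i \in GD n.
Proof.
move=> hv; rewrite !inE height_flip //.
by case/and3P: hv => hi _ _; rewrite (gtn_eqF hi) addr0.
Qed.

Lemma step_pm (s : seq bool) k : (k < size s)%N ->
  height s k.+1 = height s k + 1 \/ height s k.+1 = height s k - 1.
Proof. by move=> hk; rewrite heightS //; case: (nth false s k); [left|right]. Qed.

Lemma cover_flip n (s : (2 * n)%N.-tuple bool) i : s \in GD n -> valley s i ->
  (s, flip s i) \in hasse_edges (GD n) (@below n).
Proof.
move=> hs hv; have hv' := hv; case/and3P: hv' => hi hd hu.
have hf := height_flip hv.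
rewrite inE /=; apply/and5P; split => //.
- exact: flip_GD.
- apply/negP => /eqP e; have := @nth_flip _ s i i hi; rewrite -e.
  by rewrite eqxx (negbTE hd).
- apply/belowP => k hk; rewrite hf //; case: (k == i.+1) => //; lra.
apply/existsPn => c; apply/negP; case/andP => _ /and4P[hcs hcf /belowP h1 /belowP h2].
have hk k : (k <= 2 * n)%N -> k != i.+1 -> height c k = height s k.
  move=> hk hne; apply/eqP; rewrite eq_le h1 // andbT.
  by have := h2 k hk; rewrite hf // (negbTE hne) addr0.
have him : height c i = height s i by apply: hk; [lia|rewrite neq_ltn ltnSn].
have hsi : height s i.+1 = height s i - 1.
  by rewrite heightS ?size_tuple; [rewrite (negbTE hd)|lia].
have := @step_pm c i; rewrite size_tuple => /(_ (ltnW hi)) [] hci.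
- move/eqP: hcf; apply; apply: val_inj; apply: height_eq_seq; rewrite ?size_tuple //.
  move=> k hk'; case: (eqVneq k i.+1) => [->|hne]; last first.
    by rewrite hf // (negbTE hne) addr0 hk.
  rewrite hf ?(ltnW hi) // ?eqxx; change (height (tval c) i.+1 = height s i.+1 + 2); rewrite hci him hsi; lra.
- move/eqP: hcs; apply; apply: val_inj; apply: height_eq_seq; rewrite ?size_tuple //.
  move=> k hk'; case: (eqVneq k i.+1) => [->|hne]; last by rewrite hk.
  by rewrite hci him hsi.
Qed.

Lemma edge_flip n (s t : (2 * n)%N.-tuple bool) :
  (s, t) \in hasse_edges (GD n) (@below n) -> exists2 i, valley s i & t = flip s i.
Proof.
rewrite inE /= => /and5P[hs ht hne /belowP h1 hno].
have hsz : size s = (2 * n)%N by rewrite size_tuple.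
have htz : size t = (2 * n)%N by rewrite size_tuple.
pose P := fun k : 'I_(2 * n).+1 => height s k < height t k.
pose F := fun k : 'I_(2 * n).+1 => height s k.
have [k0 Pk0] : exists k0, P k0.
  apply/existsP; apply: contraNT hne => /existsPn hall.
  apply/eqP; apply: val_inj; apply: height_eq_seq; rewrite ?hsz ?htz // => k hk.
  apply/eqP; rewrite eq_le h1 //=; have := hall (Ordinal (hk : (k < (2 * n).+1)%N)).
  by rewrite /P /= -leNgt.
case: (@arg_minP _ _ _ k0 P F Pk0) => k Pk kmin.
have hS0 : height s (2 * n) = 0 by move: hs; rewrite inE => /eqP.
have hT0 : height t (2 * n) = 0 by move: ht; rewrite inE => /eqP.
have k_gt0 : (0 < k)%N.
  rewrite lt0n; apply/negP => /eqP k0'; move: Pk; rewrite /P k0' !height0 ltxx.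
  by [].
have k_lt : (k < 2 * n)%N.
  rewrite ltn_neqAle -ltnS ltn_ord andbT; apply/negP => /eqP kn; move: Pk.
  by rewrite /P kn hS0 hT0 ltxx.
set kk := nat_of_ord k in Pk k_gt0 k_lt.
have Pkk : height s kk < height t kk by [].
have minP j : (j <= 2 * n)%N -> height s j < height t j -> height s kk <= height s j.
  move=> hj hPj; have := kmin (inord j); rewrite /P /F inordK //; by apply.
have ekk : kk = (kk.-1).+1 by rewrite prednK.
set i := kk.-1 in ekk.
have hD : nth false s i = false.
  apply/negP => hsi; move: (heightS (s := s) (k := i)); rewrite hsz -ekk hsi => /(_ ltac:(lia)) hsk.
  have hti := heightS (s := t) (k := i); rewrite htz -ekk in hti.
  have {}hti := hti ltac:(lia).
  have hi2 : (i <= 2 * n)%N by lia.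
  case: (ltP (height s i) (height t i)) => hPi.
    by have := minP i hi2 hPi; rewrite hsk /step; lra.
  have eqi : height t i = height s i by apply/eqP; rewrite eq_le hPi h1.
  move: Pkk; rewrite hsk hti eqi /step; case: (nth false t i) => /=; lra.
have hU : nth false s kk = true.
  apply/idPn => hsi; move: (heightS (s := s) (k := kk)); rewrite hsz (negbTE hsi) => /(_ k_lt) hsk.
  have {}htk := heightS (s := t) (k := kk); rewrite htz in htk; have {}htk := htk k_lt.
  have hi2 : (kk.+1 <= 2 * n)%N by lia.
  case: (ltP (height s kk.+1) (height t kk.+1)) => hPi.
    by have := minP _ hi2 hPi; rewrite hsk /step; lra.
  have eqi : height t kk.+1 = height s kk.+1 by apply/eqP; rewrite eq_le hPi h1.
  move: Pkk eqi; rewrite hsk htk /step; case: (nth false t kk) => /=; lra.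
have hv : valley s i by rewrite /valley -ekk k_lt hD hU.
exists i => //.
have hf := height_flip hv.
have fGD := flip_GD hv hs.
case: (eqVneq (flip s i) t) => [//|hft].
exfalso; move/existsP: hno; apply; exists (flip s i); rewrite fGD /=.
apply/and4P; split.
- rewrite eq_sym; apply/negP => /eqP e; have := @nth_flip _ s i i ltac:(lia).
  by rewrite -e eqxx hD.
- exact: hft.
- apply/belowP => j hj; rewrite hf //; case: (j == i.+1) => //; lra.
- apply/belowP => j hj; rewrite hf //; case: (eqVneq j i.+1) => [ej|]; last by rewrite addr0 h1.
  rewrite -ekk in ej; rewrite ej.
  have [z hz] := height_diff_even (s := s) (t := t) (k := kk) ltac:(lia) ltac:(lia).
  have : 0 < 2%:Z * z by rewrite -hz subr_gt0.
  move=> hpos; lia.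
Qed.

Definition fset m (t : m.-tuple bool) : {set 'I_m} := [set j | ~~ tnth t j].

Lemma count_fset m (t : m.-tuple bool) : count negb t = #|fset t|.
Proof.
rewrite -[in LHS](map_tnth_enum t) count_map cardE size_filter /fset.
by rewrite enumT; apply: eq_count => j; rewrite /= inE.
Qed.

Lemma inGD' n (t : (2 * n)%N.-tuple bool) : (t \in GD n) = (#|fset t| == n).
Proof. by rewrite inGD count_fset. Qed.

Lemma card_GD n : #|GD n| = 'C(2 * n, n).
Proof.
pose G0 (A : {set 'I_(2 * n)}) : (2 * n)%N.-tuple bool := [tuple j \notin A | j < 2 * n].
have fG A : fset (G0 A) = A by apply/setP => j; rewrite !inE tnth_mktuple negbK.
have -> : GD n = G0 @: [set A : {set 'I_(2 * n)} | #|A| == n].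
  apply/setP => t; apply/idP/imsetP => [ht|[A hA ->]]; last by move: hA; rewrite inGD' fG inE.
  exists (fset t); first by rewrite inE -inGD'.
  by apply: eq_from_tnth => j; rewrite tnth_mktuple !inE negbK.
by rewrite card_imset ?card_draws ?card_ord // => A B e; rewrite -(fG A) -(fG B) e.
Qed.

Lemma card_S n i : (i.+1 < 2 * n)%N ->
  #|[set s : (2 * n)%N.-tuple bool | (s \in GD n) && valley s i]| = 'C((2 * n).-2, n.-1).
Proof.
move=> hi.
pose oi := Ordinal (ltnW hi); pose oj := Ordinal hi.
pose D := ~: [set oi; oj].
have hne : oj != oi by rewrite -val_eqE /= gtn_eqF.
have hD : #|D| = (2 * n).-2.
  have hne2 : oi != oj by rewrite eq_sym.
  rewrite /D cardsCs setCK card_ord cards2 hne2; lia.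
pose G (B : {set 'I_(2 * n)}) : (2 * n)%N.-tuple bool :=
  [tuple ~~ ((j == oi) || (j \in B)) | j < 2 * n].
have fG (B : {set _}) : B \subset D -> fset (G B) = oi |: B.
  by move=> _; apply/setP => j; rewrite !inE tnth_mktuple negbK.
have oiD (B : {set _}) : B \subset D -> oi \notin B.
  by move=> /subsetP hB; apply/negP => /hB; rewrite !inE eqxx.
have ojD (B : {set _}) : B \subset D -> oj \notin B.
  by move=> /subsetP hB; apply/negP => /hB; rewrite !inE eqxx orbT.
have nthi (t : (2 * n)%N.-tuple bool) : nth false t i = tnth t oi by rewrite (tnth_nth false).
have nthj (t : (2 * n)%N.-tuple bool) : nth false t i.+1 = tnth t oj by rewrite (tnth_nth false).
have n_gt0 : (0 < n)%N by lia.
have -> : [set s : (2 * n)%N.-tuple bool | (s \in GD n) && valley s i] =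
          G @: [set B : {set 'I_(2 * n)} | B \subset D & #|B| == n.-1].
  apply/setP => t; rewrite inE; apply/idP/imsetP => [/andP[ht hv]|[B hB ->]].
    case/and3P: hv => _ hd hu.
    exists (fset t :\ oi).
      rewrite inE; apply/andP; split.
        apply/subsetP => j; rewrite !inE => /andP[hj hjt]; rewrite negb_or hj /=.
        by apply/eqP => ej; move: hjt; rewrite ej -nthj hu.
      have hoi : oi \in fset t by rewrite inE -nthi hd.
      move: ht; rewrite inGD' (cardsD1 oi) hoi => /eqP hn.
      apply/eqP; rewrite -[in RHS]hn; by [].
    apply: eq_from_tnth => j; rewrite tnth_mktuple !inE.
    case: (eqVneq j oi) => [->|] /=; first by rewrite -nthi (negbTE hd).
    by rewrite negbK.
  move: hB; rewrite inE => /andP[hBD /eqP hB].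
  rewrite inGD' fG // cardsU1 (oiD _ hBD) hB add1n prednK //= /valley hi nthi nthj.
  by rewrite !tnth_mktuple /= (negbTE (ojD _ hBD)) orbF hne !eqxx.
rewrite card_in_imset ?cards_draws ?hD // => B1 B2.
rewrite !inE => /andP[h1 _] /andP[h2 _] e.
apply/setP => j; have := congr1 (fun t => tnth t j) e; rewrite /= !tnth_mktuple.
case: (eqVneq j oi) => [->|_] /=; last by move/negb_inj.
by rewrite (negbTE (oiD _ h1)) (negbTE (oiD _ h2)).
Qed.

Lemma ell_sum n : ell_GD n =
  \sum_(i < 2 * n) (if (i.+1 < 2 * n)%N then 'C((2 * n).-2, n.-1) else 0)%N.
Proof.
pose V := [set p : 'I_(2 * n) * (2 * n)%N.-tuple bool | (p.2 \in GD n) && valley p.2 p.1].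
pose g (p : 'I_(2 * n) * (2 * n)%N.-tuple bool) := (p.2, flip p.2 p.1).
rewrite /ell_GD.
have -> : hasse_edges (GD n) (@below n) = g @: V.
  apply/setP => [[s t]]; apply/idP/imsetP => [he|[[i s'] hp [-> ->]]].
    have [i hv ->] := edge_flip he.
    have hi : (i < 2 * n)%N by case/and3P: hv => /ltnW.
    exists (Ordinal hi, s) => //.
    by rewrite inE /= hv andbT; move: he; rewrite inE => /and5P[].
  by move: hp; rewrite inE /= => /andP[hs hv]; apply: cover_flip.
rewrite card_in_imset; last first.
  move=> [i1 s1] [i2 s2]; rewrite !inE /= => /andP[_ hv1] /andP[_ hv2] heq.
  have es : s1 = s2 := congr1 fst heq.
  have e : flip s1 i1 = flip s2 i2 := congr1 snd heq.
  rewrite -es in e hv2 *.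
  congr (_, _); apply: val_inj => /=.
  case/and3P: hv1 => hi1 hd1 _; case/and3P: hv2 => hi2 hd2 _.
  have := @nth_flip _ s1 i1 i1 hi1; rewrite e (nth_flip _ _ hi2) eqxx.
  case: (eqVneq (val i1) (val i2)) => // _.
  by case: ifP => // _; rewrite (negbTE hd1).
rewrite -sum1_card.
rewrite (eq_bigl (fun p : 'I_(2 * n) * (2 * n)%N.-tuple bool => predT p.1 && ((p.2 \in GD n) && valley p.2 p.1))); last first.
  by move=> p; rewrite inE.
rewrite -(pair_big_dep predT (fun (i : 'I_(2 * n)) (s : (2 * n)%N.-tuple bool) => (s \in GD n) && valley s i) (fun _ _ => 1%N)) /=.
apply: eq_bigr => i _; rewrite sum1dep_card.
case: ifP => hi; first exact: card_S.
apply: eq_card0 => s; rewrite inE /valley hi /=; by rewrite andbF.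
Qed.

Lemma ell0 : ell_GD 0 = 0%N.
Proof. by rewrite ell_sum big_ord0. Qed.

Lemma ellS m : ell_GD m.+1 = ((2 * m).+1 * 'C(2 * m, m))%N.
Proof.
rewrite ell_sum -(big_mkord xpredT (fun i => if (i.+1 < 2 * m.+1)%N then 'C((2 * m.+1).-2, m.+1.-1) else 0%N)).
have -> : (2 * m.+1 = (2 * m).+2)%N by lia.
rewrite big_nat_recr //= ltnn addr0.
rewrite (eq_big_nat _ _ (F2 := fun _ => 'C(2 * m, m))); last by move=> i /andP[_ hi]; rewrite ltnS hi.
by rewrite sumr_const_nat subn0 -mulr_natl natn.
Qed.

Lemma binom_id m : ('C((2 * m).+2, m.+1) * m.+1 = 2 * (2 * m).+1 * 'C(2 * m, m))%N.
Proof.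
have h1 := mul_bin_diag (2 * m).+2 m.
have h2 := mul_bin_diag (2 * m).+1 m.
have h3 : 'C((2 * m).+1, (2 * m).+1 - m) = 'C((2 * m).+1, m) by rewrite bin_sub //; lia.
have e : ((2 * m).+1 - m = m.+1)%N by lia.
rewrite e in h3; simpl in h1, h2.
apply/eqP; rewrite -(eqn_pmul2l (ltn0Sn m)); apply/eqP.
rewrite h3 in h2; simpl in h1.
move: h1 h2; set X := 'C(_, m); set Y := 'C(_, m.+1); set Z := 'C(2 * m, m).
move=> h1 h2.
have -> : (m.+1 * (Y * m.+1) = (m.+1 * Y) * m.+1)%N by ring.
rewrite -h1 -mulnA (mulnC X) -h2; ring.
Qed.

Lemma gf_prod m : (4 ^+ m * \prod_(i < m) (3%:R / 2%:R + i%:R) : rat) =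
  ((2 * m).+1 * 'C(2 * m, m))%:R * (m`!)%:R.
Proof.
elim: m => [|m IH]; first by rewrite big_ord0 expr0 mulr1.
rewrite big_ord_recr /= exprS factS.
have e1 : ((2 * m.+1).+1 * 'C(2 * m.+1, m.+1) * (m.+1 * m`!))%N =
          ((2 * m).+3 * 2 * ((2 * m).+1 * 'C(2 * m, m) * m`!))%N.
  have -> : (2 * m.+1 = (2 * m).+2)%N by lia.
  have hb := binom_id m.
  rewrite mulnA -(mulnA _ _ m.+1) hb; ring.
have IH' : (((2 * m).+1 * 'C(2 * m, m) * m`!)%N%:R : rat) = 4 ^+ m * \prod_(i < m) (3%:R / 2%:R + i%:R) by rewrite natrM IH.
rewrite -natrM e1 natrM IH' natrM.
have -> : ((2 * m).+3)%:R = 2 * m%:R + 3 :> rat by rewrite -[(2 * m).+3]addn3 natrD natrM.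
by field.
Qed.

Lemma gf_val m : gf_coef m.+1 = ((2 * m).+1 * 'C(2 * m, m))%:R.
Proof.
rewrite /gf_coef gf_prod mulfK // pnatr_eq0 -lt0n fact_gt0 //.
Qed.

Lemma ell_binom n : (ell_GD n)%:R = ('C(2 * n, n))%:R * n%:R / 2%:R :> rat.
Proof.
case: n => [|m]; first by rewrite ell0 mulr0 mul0r.
rewrite ellS -natrM.
have -> : (2 * m.+1 = (2 * m).+2)%N by lia.
rewrite binom_id natrM; by field.
Qed.

Theorem mainTheorem5 :
  forall n : nat,
    [/\ (ell_GD n)%:R = gf_coef n :> rat,
        (ell_GD n)%:R = ('C(2 * n, n))%:R * n%:R / 2%:R :> rat
      & i_GD n = n%:R / 2%:R].
Proof.
move=> n; split.
- by case: n => [|m]; [rewrite ell0|rewrite ellS gf_val].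
- exact: ell_binom.
- rewrite /i_GD ell_binom card_GD.
  have hC : ('C(2 * n, n))%:R != 0 :> rat by rewrite pnatr_eq0 -lt0n bin_gt0; lia.
  by field; rewrite hC.
Qed.
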